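(* Let $\theta\in[0,1]$ and $\psi=\frac12-\frac{\theta}{4}$. On the cycle graph $C_5$, for $i\in\{1,2\}$ let $P^i_n$ be the probability that the tipsy cop and drunken robber game, started with cop and robber at distance $i$ and the robber moving first, lasts at least $n$ rounds (no capture during the first $2n$ moves). Then for all $n\ge 1$, \[ P_n^1=\psi P^1_{n-1}+\frac{\theta}{4}P^2_{n-1},\qquad P_n^2=\psi P^1_{n-1}+\frac{\theta}{2}P^2_{n-1}. \]
   Context: Tipsy cop and drunken robber game on a graph: a cop and a robber occupy distinct vertices and alternate moves, the robber moving first; on each move the mover must move to an adjacent vertex (no staying put). The robber always moves to a uniformly random neighbor. The cop, independently at each of her moves, with probability $\theta$ moves to a uniformly random neighbor and with probability $1-\theta$ moves to a neighbor that decreases her distance to the robber (onto the robber if adjacent). All random choices are independent; the robber is captured (game over) as soon as both occupy the same vertex. A round consists of one robber move followed by one cop move. $P^1_0=P^2_0=1$. *)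

(* Defs.v *)
From HB Require Import structures.
From mathcomp Require Import all_boot all_order all_algebra.
Set Implicit Arguments. Unset Strict Implicit. Unset Printing Implicit Defensive.
Import Order.TTheory GRing.Theory Num.Theory.
Local Open Scope ring_scope.

Section Game.
Variables (R : realFieldType) (T : finType) (adj : rel T) (dist : T -> T -> nat).

Definition rw_prob (x y : T) : R :=
  if adj x y then (#|[pred z | adj x z]|%:R)^-1 else 0.

Definition cop_prob (theta : R) (c r c' : T) : R :=
  theta * rw_prob c c' +
  (1 - theta) *
    (if adj c c' && (dist c' r < dist c r)%N
     then (#|[pred z | adj c z && (dist z r < dist c r)%N]|%:R)^-1 else 0).

Fixpoint survive (theta : R) (n : nat) (c r : T) : R :=
  match n with
  | 0 => 1
  | n'.+1 =>
      \sum_(r' : T) rw_prob r r' *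
        (if r' == c then 0 else
           \sum_(c' : T) cop_prob theta c r' c' *
             (if c' == r' then 0 else survive theta n' c' r'))
  end.
End Game.

Definition adjC5 : rel 'I_5 :=
  fun i j => (val j == (val i).+1 %% 5)%N || (val i == (val j).+1 %% 5)%N.

Definition distC5 (i j : 'I_5) : nat :=
  minn ((val i + 5 - val j) %% 5) ((val j + 5 - val i) %% 5).

(* Main.v *)
Require Import Defs.
From HB Require Import structures.
From mathcomp Require Import all_boot all_order all_algebra.
From mathcomp Require Import ring lra.
Import Order.TTheory GRing.Theory Num.Theory.
Local Open Scope ring_scope.

Lemma sum5 (F : 'I_5 -> nat) : (\sum_(i : 'I_5) F i =
  F (@Ordinal 5 0 isT) + F (@Ordinal 5 1 isT) + F (@Ordinal 5 2 isT)
  + F (@Ordinal 5 3 isT) + F (@Ordinal 5 4 isT))%N.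
Proof.
rewrite !big_ord_recr big_ord0 /= add0n.
by congr (_ + _ + _ + _ + _)%N; congr F; apply: val_inj.
Qed.

Ltac crunch := rewrite -?sum1_card ?big_mkcond /= !sum5; vm_compute; reflexivity.

Lemma card_adj (x : 'I_5) : #|[pred z | adjC5 x z]| = 2%N.
Proof. case: x => [[|[|[|[|[|m]]]]] Hm] //; crunch. Qed.

Lemma card_cl (x r : 'I_5) : x != r ->
  #|[pred z | adjC5 x z && (distC5 z r < distC5 x r)%N]| = 1%N.
Proof.
case: x => [[|[|[|[|[|m]]]]] Hm] //; case: r => [[|[|[|[|[|k]]]]] Hk] //;
  move=> H; try crunch; by [].
Qed.

Lemma dist12 (c r : 'I_5) : c != r -> distC5 c r != 1%N -> distC5 c r = 2%N.
Proof.
case: c => [[|[|[|[|[|m]]]]] Hm] //; case: r => [[|[|[|[|[|k]]]]] Hk] //;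
  by vm_compute.
Qed.

Lemma dist1_neq (c r : 'I_5) : distC5 c r = 1%N -> c != r.
Proof.
case: c => [[|[|[|[|[|m]]]]] Hm] //; case: r => [[|[|[|[|[|k]]]]] Hk] //;
  by vm_compute.
Qed.

Lemma dist2_neq (c r : 'I_5) : distC5 c r = 2%N -> c != r.
Proof.
case: c => [[|[|[|[|[|m]]]]] Hm] //; case: r => [[|[|[|[|[|k]]]]] Hk] //;
  by vm_compute.
Qed.

Definition al (c r r' c' : 'I_5) : bool :=
  adjC5 r r' && (r' != c) && (c' != r') && adjC5 c c'.
Definition be (c r r' c' : 'I_5) : bool :=
  al c r r' c' && (distC5 c' r' < distC5 c r')%N.
Definition A1 c r r' c' := al c r r' c' && (distC5 c' r' == 1%N).
Definition A2 c r r' c' := al c r r' c' && (distC5 c' r' != 1%N).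
Definition B1 c r r' c' := be c r r' c' && (distC5 c' r' == 1%N).
Definition B2 c r r' c' := be c r r' c' && (distC5 c' r' != 1%N).

Definition cntf (P : 'I_5 -> 'I_5 -> 'I_5 -> 'I_5 -> bool) c r : nat :=
  (\sum_(r' : 'I_5) \sum_(c' : 'I_5) (P c r r' c' : nat))%N.

Ltac crunch2 := vm_compute; reflexivity.

Lemma cnt1 (c r : 'I_5) : distC5 c r = 1%N ->
  [/\ cntf A1 c r = 1%N, cntf A2 c r = 1%N, cntf B1 c r = 1%N & cntf B2 c r = 0%N].
Proof.
rewrite /cntf !sum5.
case: c => [[|[|[|[|[|m]]]]] Hm] //; case: r => [[|[|[|[|[|k]]]]] Hk] //;
  move=> H; try (split; crunch2); by move: H; vm_compute.
Qed.

Lemma cnt2 (c r : 'I_5) : distC5 c r = 2%N ->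
  [/\ cntf A1 c r = 1%N, cntf A2 c r = 2%N, cntf B1 c r = 1%N & cntf B2 c r = 0%N].
Proof.
rewrite /cntf !sum5.
case: c => [[|[|[|[|[|m]]]]] Hm] //; case: r => [[|[|[|[|[|k]]]]] Hk] //;
  move=> H; try (split; crunch2); by move: H; vm_compute.
Qed.
Section R.
Variables (R : realFieldType) (theta : R).
Definition b2r (b : bool) : R := if b then 1 else 0.
Local Notation S := (survive adjC5 distC5 theta).

Lemma step (n : nat) (c r : 'I_5) : S n.+1 c r =
  \sum_(r' : 'I_5) \sum_(c' : 'I_5)
     ((theta / 4) * b2r (al c r r' c') + ((1 - theta) / 2) * b2r (be c r r' c')) * S n c' r'.
Proof.
rewrite [LHS]/=; apply: eq_bigr => r' _.
rewrite /rw_prob card_adj /be /al.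
have h2 : (2%:R : R) != 0 by rewrite pnatr_eq0.
case: (adjC5 r r'); last first.
  by rewrite mul0r big1 // => c' _; rewrite /b2r /= !mulr0 add0r mul0r.
case: eqP => [->|/eqP ne].
  by rewrite mulr0 big1 // => c' _; rewrite /b2r ?eqxx /= !mulr0 add0r mul0r.
rewrite mulr_sumr; apply: eq_bigr => c' _.
rewrite /cop_prob /rw_prob card_adj card_cl; last by rewrite eq_sym.
rewrite /=.
case: eqP => [->|/eqP ne2]; first by rewrite /b2r ?eqxx /= !mulr0 add0r mul0r.

case: (adjC5 c c'); case: (distC5 c' r' < distC5 c r')%N; rewrite /b2r /=; field; rewrite ?pnatr_eq0 ?mulf_neq0 // ?pnatr_eq0 //.
Qed.

Lemma sumb2r (P : 'I_5 -> 'I_5 -> 'I_5 -> 'I_5 -> bool) c r (x : R) :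
  \sum_(r' : 'I_5) \sum_(c' : 'I_5) (b2r (P c r r' c') * x) = (cntf P c r)%:R * x.
Proof.
rewrite /cntf natr_sum mulr_suml; apply: eq_bigr => r' _.
rewrite natr_sum mulr_suml; apply: eq_bigr => c' _.
by rewrite /b2r; case: (P c r r' c'); rewrite /= ?(mul1r, mul0r, mulr1n, mulr0n).
Qed.

Lemma step2 n (a b : R)
  (H : forall c r, c != r -> S n c r = if distC5 c r == 1%N then a else b) c r :
  S n.+1 c r = (cntf A1 c r)%:R * (theta/4*a) + (cntf A2 c r)%:R * (theta/4*b)
    + (cntf B1 c r)%:R * ((1-theta)/2*a) + (cntf B2 c r)%:R * ((1-theta)/2*b).
Proof.
rewrite step.
transitivity (\sum_(r' : 'I_5) \sum_(c' : 'I_5)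
  (b2r (A1 c r r' c') * (theta/4*a) + b2r (A2 c r r' c') * (theta/4*b)
    + b2r (B1 c r r' c') * ((1-theta)/2*a) + b2r (B2 c r r' c') * ((1-theta)/2*b))).
  apply: eq_bigr => r' _; apply: eq_bigr => c' _.
  rewrite /A1 /A2 /B1 /B2 /be.
  case E: (al c r r' c') => /=; last by rewrite /b2r; ring.
  have ne : c' != r' by move: E; rewrite /al => /andP[/andP[_ ?] _].
  rewrite H //.
  by case: (distC5 c' r' == 1%N); case: (_ < _)%N; rewrite /b2r /=; ring.
under eq_bigr => r' _ do rewrite !big_split /=.
by rewrite !big_split /= !sumb2r.
Qed.

Lemma inv n : exists a b : R, forall c r, c != r ->
  S n c r = if distC5 c r == 1%N then a else b.
Proof.
elim: n => [|n [a [b H]]]; first by exists 1, 1 => c r _; case: ifP.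
exists ((2^-1 - theta/4) * a + theta/4 * b), ((2^-1 - theta/4) * a + theta/2 * b).
move=> c r ne; rewrite (@step2 n a b H).
case: eqP => [/cnt1 [-> -> -> ->] | /eqP n1].
  by rewrite /=; field; rewrite ?pnatr_eq0.
have [-> -> -> ->] := cnt2 _ _ (dist12 _ _ ne n1).
by rewrite /=; field; rewrite ?pnatr_eq0.
Qed.
End R.

Theorem mainTheorem8 (R : realFieldType) (theta : R) :
  0 <= theta <= 1 ->
  let psi := 2^-1 - theta / 4 in
  let P := survive adjC5 distC5 theta in
  forall n : nat, (1 <= n)%N ->
  forall c1 r1 c2 r2 : 'I_5, distC5 c1 r1 = 1%N -> distC5 c2 r2 = 2%N ->
    (forall c r : 'I_5, distC5 c r = 1%N ->
       P n c r = psi * P n.-1 c1 r1 + theta / 4 * P n.-1 c2 r2) /\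
    (forall c r : 'I_5, distC5 c r = 2%N ->
       P n c r = psi * P n.-1 c1 r1 + theta / 2 * P n.-1 c2 r2).
Proof.
move=> _ psi P [|m] // _ c1 r1 c2 r2 h1 h2.
have [a [b H]] := @inv R theta m.
have e1 : P m c1 r1 = a by rewrite /P (H _ _ (dist1_neq _ _ h1)) h1.
have e2 : P m c2 r2 = b by rewrite /P (H _ _ (dist2_neq _ _ h2)) h2.
rewrite /= e1 e2.
split => c r hd; rewrite /P (@step2 R theta m a b H).
  have [-> -> -> ->] := cnt1 _ _ hd.
  by rewrite /psi /=; field; rewrite ?pnatr_eq0.
have [-> -> -> ->] := cnt2 _ _ hd.
by rewrite /psi /=; field; rewrite ?pnatr_eq0.
Qed.
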